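(* Let $k\ge 2$ and define the formal power series $D^{(k)}(x,y)=\sum_{n\ge 2}\sum_{j=k}^{(k-1)n} d^{(k)}_{n,j}\,x^j y^n\in\mathbb{Q}[x][[y]]$. Then, as formal power series in $y$ with coefficients in $\mathbb{Q}[x]$, $$(1+x^k y-x)\,D^{(k)}(x,y)=x^k y\,S^{(k)}(y)-x^{2k-1}y^2,$$ i.e. $D^{(k)}(x,y)=\dfrac{x^k yS^{(k)}(y)-x^{2k-1}y^2}{1+x^ky-x}$.
   Context: For $i\ge 1$, $s^{(k)}_i=\frac{k-1}{ki-1}\binom{ki-1}{i-1}$, and $S^{(k)}(z)=\sum_{i\ge1}s^{(k)}_i z^i$. For $n\ge2$ and $k\le j\le (k-1)n$, $d^{(k)}_{n,j}=\binom{kn-2-j}{n-2}-\sum_{\ell=1}^{\,n-\lceil j/(k-1)\rceil} s^{(k)}_\ell\binom{k(n-\ell)-1-j}{n-\ell-1}$; equivalently $d^{(k)}_{n,j}$ is the number of lattice paths with unit south and west steps from $((k-1)n,n-1)$ to $(j,1)$ that never touch the line $(k-1)y=x$. *)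

(* Defs.v *)
From mathcomp Require Import all_boot all_order all_algebra.
Set Implicit Arguments. Unset Strict Implicit. Unset Printing Implicit Defensive.
Import GRing.Theory Num.Theory.
Local Open Scope ring_scope.

Definition s_k (k i : nat) : rat :=
  ((k - 1)%:R / (k * i - 1)%:R) * ('C(k * i - 1, i - 1))%:R.

(* d^{(k)}_{n,j}, with ceil(j/(k-1)) = (j + k - 2) %/ (k - 1). *)
Definition d_k (k n j : nat) : rat :=
  ('C(k * n - 2 - j, n - 2))%:R
  - \sum_(1 <= l < (n - (j + k - 2) %/ (k - 1)).+1)
        s_k k l * ('C(k * (n - l) - 1 - j, n - l - 1))%:R.

(* Formal power series in y with coefficients in Q[x]: coefficient sequences. *)
Definition fps := nat -> {poly rat}.

Definition fps_mul (f g : fps) : fps :=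
  fun n => \sum_(i < n.+1) f i * g (n - i)%N.

Definition fps_sub (f g : fps) : fps := fun n => f n - g n.

Definition fps_mono (c : {poly rat}) (m : nat) : fps :=
  fun n => if n == m then c else 0.

Definition S_k (k : nat) : fps :=
  fun i => if (1 <= i)%N then (s_k k i)%:P else 0.

Definition D_k (k : nat) : fps :=
  fun n => if (2 <= n)%N then
             \sum_(k <= j < (k - 1) * n + 1) d_k k n j *: 'X^j
           else 0.

Definition denom_k (k : nat) : fps :=
  fun n => if n == 0%N then 1 - 'X else if n == 1%N then 'X^k else 0.

(* Main.v *)
Require Import Defs.
From mathcomp Require Import all_boot all_order all_algebra.
From mathcomp Require Import zify ring lra.
Import GRing.Theory Num.Theory.
Local Open Scope ring_scope.

Section Conv.
Variable k : nat.
Hypothesis hk : (2 <= k)%N.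

Definition aa (l : nat) : rat := if l == 0%N then 1 else - s_k k l.
Definition Fq (q m : nat) : rat := ('C(k * m + q - 1, m))%:R.
Definition Gq (q m : nat) : rat := ('C(k * m + q - 2, m))%:R.
Definition UU (n q : nat) : rat := \sum_(0 <= l < n.+1) aa l * Fq q (n - l).

Lemma Fq_pascal q m : Fq q.+1 m.+1 = Fq q m.+1 + Fq (q + k) m.
Proof.
rewrite /Fq -natrD.
have -> : (k * m.+1 + q.+1 - 1 = (k * m + q + k - 1).+1)%N by lia.
have -> : (k * m.+1 + q - 1 = (k * m + q + k - 1))%N by lia.
have -> : (k * m + (q + k) - 1 = (k * m + q + k - 1))%N by lia.
by rewrite binS.
Qed.

Lemma Gq_pascal q m : Gq q.+1 m.+1 = Gq q m.+1 + Gq (q + k) m.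
Proof.
rewrite /Gq -natrD.
have -> : (k * m.+1 + q.+1 - 2 = (k * m + q + k - 2).+1)%N by lia.
have -> : (k * m.+1 + q - 2 = (k * m + q + k - 2))%N by lia.
have -> : (k * m + (q + k) - 2 = (k * m + q + k - 2))%N by lia.
by rewrite binS.
Qed.

Lemma UU_pascal n q : UU n.+1 q.+1 = UU n.+1 q + UU n (q + k).
Proof.
rewrite /UU big_nat_recr //= [X in _ = X + _]big_nat_recr //= subnn.
have -> : Fq q.+1 0 = Fq q 0 by rewrite /Fq !bin0.
rewrite addrAC; congr (_ + _).
rewrite -big_split /=; apply: eq_big_nat => l /andP [_ hl].
have -> : (n.+1 - l = (n - l).+1)%N by lia.
by rewrite Fq_pascal mulrDr.
Qed.

Lemma UU0 q : UU 0 q = Gq q 0.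
Proof. by rewrite /UU big_nat1 /aa /= /Fq /Gq !bin0 mul1r. Qed.

Lemma bin_kM M : (0 < M)%N -> 'C(k * M - 1, M) = ((k - 1) * 'C(k * M - 1, M.-1))%N.
Proof.
move=> hM; case: M hM => // m _ /=.
have := mul_bin_left (k * m.+1 - 1) m.
have -> : (k * m.+1 - 1 - m = (k - 1) * m.+1)%N.
  have -> : ((k - 1) * m.+1 = k * m.+1 - m.+1)%N by rewrite mulnBl mul1n.
  lia.
rewrite (mulnC (k - 1)%N) -mulnA => /eqP; rewrite eqn_mul2l /= => /eqP ->.
by [].
Qed.


Lemma UU_anchor n : UU n k = Gq k n -> UU n.+1 1 = Gq 1 n.+1.
Proof.
move=> IH.
rewrite /UU big_nat_recr //= subnn.
have -> : \sum_(0 <= i < n.+1) aa i * Fq 1 (n.+1 - i) = k%:R * UU n k.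
  rewrite /UU mulr_sumr; apply: eq_big_nat => l /andP [_ hl].
  have -> : (n.+1 - l = (n - l).+1)%N by lia.
  rewrite mulrCA; congr (_ * _).
  rewrite /Fq -natrM; congr (_%:R).
  have := mul_bin_diag (k * (n - l).+1) (n - l).
  have -> : ((k * (n - l).+1).-1 = k * (n - l) + k - 1)%N by lia.
  rewrite addnK mulnAC [X in _ = X -> _]mulnC => /eqP; rewrite eqn_mul2r /= => /eqP <-.
  done.
rewrite IH /aa /= /Fq /Gq bin0 mulr1 /s_k.
set K := (k * n.+1 - 1)%N.
have -> : (k * n.+1 + 1 - 2 = K)%N by rewrite /K; lia.
have -> : (k * n + k - 2 = K.-1)%N by rewrite /K; lia.
have -> : (n.+1 - 1 = n)%N by lia.
have hK : (0 < K)%N by rewrite /K; lia.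
have e1 := bin_kM n.+1 (ltn0Sn n).
rewrite -/K /= in e1.
have e2 := mul_bin_diag K n.
rewrite e1 in e2.
rewrite e1.
have hKr : (K%:R : rat) != 0 by rewrite pnatr_eq0 -lt0n.
have e3 : ('C(K.-1, n))%:R = (n.+1)%:R * ((k-1)%:R * ('C(K, n))%:R) / (K%:R : rat).
  by rewrite -!natrM -e2 natrM mulrC mulKf.
rewrite e3.
have eK : (K%:R : rat) = k%:R * (n.+1)%:R - 1.
  by rewrite /K natrB ?natrM //; lia.
rewrite eK in hKr *.
field.
have -> : (1 + n%:R : rat) = n.+1%:R by rewrite -addn1 natrD addrC.
done.
Qed.


Lemma UU_all n : forall q, UU n q = Gq q n.
Proof.
elim: n => [|n IH] q; first exact: UU0.
have h1 := UU_anchor n (IH k).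
have h0 : UU n.+1 0 = Gq 0 n.+1.
  by have := UU_pascal n 0; rewrite h1 IH add0n (Gq_pascal 0 n) add0n => /addIr.
elim: q => [|q IHq]; first done.
case: q IHq => [|q] IHq; first done.
by rewrite UU_pascal IHq IH -Gq_pascal.
Qed.

Lemma conv_E n i : (1 <= i <= k)%N ->
  \sum_(1 <= l < n.+2) s_k k l * ('C(k * (n.+2 - l) - 1 - i, n.+2 - l - 1))%:R
  = ('C(k * n.+2 - 2 - i, n.+2 - 2))%:R.
Proof.
move=> /andP [hi1 hi2].
have := UU_all n.+1 (k - i).
rewrite /UU big_nat_recl // /aa /= mul1r subn0.
rewrite big_add1 /=.
have -> : \sum_(0 <= j < n.+1) (if j.+1 == 0%N then 1 else - s_k k j.+1) * Fq (k - i) (n.+1 - j.+1)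
   = - \sum_(0 <= j < n.+1) s_k k j.+1 * ('C(k * (n.+2 - j.+1) - 1 - i, n.+2 - j.+1 - 1))%:R.
  rewrite -sumrN; apply: eq_big_nat => j /andP [_ hj] /=.
  rewrite mulNr; congr (- (_ * _)); rewrite /Fq.
  have -> : (n.+2 - j.+1 = (n.+1 - j.+1).+1)%N by lia.
  rewrite mulnS; congr ('C(_,_))%:R; lia.
move=> /eqP; rewrite subr_eq addrC -subr_eq => /eqP <-.
rewrite /Fq /Gq.
have -> : (k * n.+1 + (k - i) - 1 = (k * n.+1 + (k - i) - 2).+1)%N.
  have : (2 <= k * n.+1)%N by rewrite mulnS; lia.
  lia.
rewrite binS natrD addrAC subrr add0r.
congr ('C(_,_))%:R; rewrite ?mulnS; lia.
Qed.

Definition cc (x : nat) : nat := ((x + k - 2) %/ (k - 1))%N.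

Lemma cc_bounds x : (x <= (k - 1) * cc x /\ (k - 1) * cc x < x + k - 1)%N.
Proof.
rewrite /cc.
have := divn_eq (x + k - 2) (k - 1).
have : (0 < k - 1)%N by lia.
move=> /(ltn_pmod (x + k - 2)).
set q := ((x + k - 2) %/ (k - 1))%N; set r := ((x + k - 2) %% (k - 1))%N.
rewrite (mulnC q). lia.
Qed.

Lemma kmB m : ((k - 1) * m = k * m - m)%N.
Proof. by rewrite mulnBl mul1n. Qed.

Lemma T_zero m j : (2 <= m)%N -> ((k - 1) * m < j)%N -> 'C(k * m - 1 - j, m - 1) = 0%N.
Proof. move=> h1 h2; apply: bin_small; move: h2; rewrite kmB; lia. Qed.

Lemma T_pascal m j : (2 <= m)%N -> (j - 1 <= (k - 1) * m)%N -> (k <= j)%N ->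
  'C(k * m - 1 - (j - 1), m - 1) = ('C(k * m - 1 - j, m - 1) + 'C(k * (m - 1) - 1 - (j - k), m - 1 - 1))%N.
Proof.
move=> h1; rewrite kmB => h2 h3.
have -> : (k * m - 1 - (j - 1) = (k * m - 1 - j).+1)%N by lia.
rewrite mulnBr muln1.
have -> : (k * m - k - 1 - (j - k) = k * m - 1 - j)%N by lia.
have -> : (m - 1 = (m - 1 - 1).+1)%N by lia.
by rewrite binS subSS subn0.
Qed.

Lemma d_small N i : (1 <= i < k)%N -> d_k k N.+2 i = 0.
Proof.
move=> hi; rewrite /d_k.
have [h1 h2] := cc_bounds i.
have -> : ((i + k - 2) %/ (k - 1) = 1)%N.
  rewrite -/(cc i); move: h1 h2; case: (cc i) => [|[|c]] //; first lia.
  rewrite !mulnS => a b. move: hi => /andP [hi1 hi2]. lia.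
rewrite subn1 /=.
rewrite conv_E ?subrr //. lia.
Qed.

Lemma d_k_eq N : d_k k N.+2 k = s_k k N.+1.
Proof.
rewrite /d_k.
have -> : ((k + k - 2) %/ (k - 1) = 2)%N.
  have -> : (k + k - 2 = 2 * (k - 1) + 0)%N by lia.
  by rewrite divnMDl ?div0n ?addn0 //; lia.
have E := conv_E N k.
rewrite big_nat_recr //= in E.
rewrite (_ : N.+2 - N.+1 = 1)%N in E; last by rewrite -?/P; lia.
rewrite muln1 subnn bin0 mulr1 in E.
rewrite -E; last lia.
have -> : (N.+2 - 2 = N)%N by lia.
by rewrite addrAC subrr add0r.
Qed.

Lemma d_top n : (2 <= n)%N -> d_k k n ((k - 1) * n) = 1.
Proof.
move=> hn; rewrite /d_k.
have -> : (((k - 1) * n + k - 2) %/ (k - 1) = n)%N.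
  have -> : ((k - 1) * n + k - 2 = n * (k - 1) + (k - 2))%N.
    rewrite [in RHS]mulnC; set X := ((k - 1) * n)%N; lia.
  by rewrite divnMDl ?divn_small ?addn0 //; lia.
rewrite subnn big_geq // subr0.
have hkn : (n <= k * n)%N by rewrite leq_pmull //; lia.
have -> : (k * n - 2 - (k - 1) * n = n - 2)%N by rewrite kmB; lia.
by rewrite binn.
Qed.

Lemma d_two j : (k <= j <= 2 * k - 2)%N -> d_k k 2 j = 1.
Proof.
move=> hj; rewrite /d_k.
have [h1 h2] := cc_bounds j.
have -> : ((j + k - 2) %/ (k - 1) = 2)%N.
  rewrite -/(cc j); move: h1 h2; case: (cc j) => [|[|[|c]]] //; move: hj => /andP [hj1 hj2].
  - lia.
  - lia.
  - rewrite !mulnS; set X := ((k - 1) * c)%N; lia.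
by rewrite subnn big_geq // subr0 bin0.
Qed.

Lemma cc_ge2 x : (k <= x)%N -> (2 <= cc x)%N.
Proof.
move=> hx; have [h _] := cc_bounds x; move: h.
case: (cc x) => [|[|c]] //; rewrite ?muln0 ?muln1; lia.
Qed.

Lemma mono_km a b : (a <= b)%N -> ((k - 1) * a <= (k - 1) * b)%N.
Proof. by move=> h; rewrite leq_mul2l h orbT. Qed.

Lemma d_rec n j : (3 <= n)%N -> (k < j <= (k - 1) * n)%N ->
  d_k k n (j - 1) = d_k k n j + d_k k (n - 1) (j - k).
Proof.
move=> hn /andP [hj1 hj2].
have hkn : (n <= k * n)%N by rewrite leq_pmull //; lia.
have hB : 'C(k * n - 2 - (j - 1), n - 2) =
    ('C(k * n - 2 - j, n - 2) + 'C(k * (n - 1) - 2 - (j - k), n - 1 - 2))%N.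
  move: hj2; rewrite kmB mulnBr muln1 => hj2.
  have -> : (k * n - 2 - (j - 1) = (k * n - 2 - j).+1)%N by lia.
  have -> : (k * n - k - 2 - (j - k) = k * n - 2 - j)%N by lia.
  have -> : (n - 1 - 2 = n - 3)%N by lia.
  have -> : (n - 2 = (n - 3).+1)%N by lia.
  by rewrite binS.
have hk1 : (0 < k - 1)%N by lia.
have [hb1 _] := cc_bounds (j - 1).
have [_ hb0] := cc_bounds j.
have c1ge := cc_ge2 (j - 1) (ltac:(lia)).
have c10 : (cc (j - 1) <= cc j)%N by apply: leq_div2r; lia.
have ec : (cc (j - 1) = (cc (j - k)).+1)%N.
  rewrite /cc; have -> : (j - 1 + k - 2 = (k - 1) + (j - k + k - 2))%N by lia.
  by rewrite divnDl // divnn hk1 add1n.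
rewrite /d_k -!/(cc _).
have hQ0 : \sum_(1 <= l < (n - cc j).+1) s_k k l * ('C(k * (n - l) - 1 - j, n - l - 1))%:R
   = \sum_(1 <= l < (n - cc (j - 1)).+1) s_k k l * ('C(k * (n - l) - 1 - j, n - l - 1))%:R.
  rewrite [RHS](big_cat_nat _ (n := (n - cc j).+1)) //=; last lia.
  rewrite [X in _ = _ + X]big1_seq ?addr0 // => l /andP [_]; rewrite mem_index_iota => /andP [hl1 hl2].
  have hm : ((k - 1) * (n - l) <= (k - 1) * (cc j - 1))%N by apply: mono_km; lia.
  rewrite T_zero ?mulr0 //; first lia.
  move: hm hb0; rewrite (mulnBr (k - 1)%N (cc j) 1) muln1.
  set X := ((k - 1) * (n - l))%N; set Y := ((k - 1) * cc j)%N; lia.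
rewrite hQ0 (_ : n - 1 - cc (j - k) = n - cc (j - 1))%N; last lia.
have hQ : \sum_(1 <= l < (n - cc (j - 1)).+1) s_k k l * ('C(k * (n - l) - 1 - (j - 1), n - l - 1))%:R
  = \sum_(1 <= l < (n - cc (j - 1)).+1) s_k k l * ('C(k * (n - l) - 1 - j, n - l - 1))%:R
  + \sum_(1 <= l < (n - cc (j - 1)).+1) s_k k l * ('C(k * (n - 1 - l) - 1 - (j - k), n - 1 - l - 1))%:R.
  rewrite -big_split; apply: eq_big_nat => l /andP [hl1 hl2] /=.
  rewrite -mulrDr -natrD; congr (_ * _%:R).
  rewrite (_ : n - 1 - l = n - l - 1)%N; last lia.
  apply: T_pascal; [lia | | lia].
  have hm : ((k - 1) * cc (j - 1) <= (k - 1) * (n - l))%N by apply: mono_km; lia.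
  lia.
rewrite hQ hB natrD; ring.
Qed.

End Conv.

Definition dd k N x : rat := if (2 <= N)%N && (k <= x <= (k - 1) * N)%N then d_k k N x else 0.

Lemma dd_in k N x : (2 <= N)%N -> (k <= x)%N -> (x <= (k - 1) * N)%N -> dd k N x = d_k k N x.
Proof. by move=> h1 h2 h3; rewrite /dd h1 h2 h3. Qed.

Lemma dd_out k N x : ((x < k) || ((k - 1) * N < x))%N -> dd k N x = 0.
Proof.
rewrite /dd; case/orP => h; case: ifP => // /andP [_ /andP [h1 h2]]; exfalso; move: h1 h2 h; lia.
Qed.

Lemma coef_main k N i : (2 <= k)%N -> (3 <= N)%N ->
  dd k N i - (if i == 0%N then 0 else dd k N i.-1) + (if (i < k)%N then 0 else dd k N.-1 (i - k))
  = if i == k then s_k k N.-1 else 0.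
Proof.
move=> hk hN.
case: N hN => [|[|[|N]]] // _.
set P := ((k - 1) * N.+3)%N.
have hP1 : ((k - 1) * N.+2 = P - (k - 1))%N.
  by rewrite /P !mulnS; set X := ((k - 1) * N)%N; lia.
have hP3 : (3 * (k - 1) <= P)%N.
  by rewrite /P mulnC; apply: leq_mul => //; lia.
rewrite /= -subn1.
case: (ltnP i k) => hik.
  rewrite addr0 (_ : (i == k) = false); last by apply/negbTE; rewrite neq_ltn hik.
  rewrite dd_out; last by rewrite hik.
  case: ifP => _; rewrite ?subr0 // dd_out ?subr0 //; apply/orP; left; lia.
have [-> | hik'] := eqVneq i k.
  rewrite dd_in //; last by rewrite -?/P; lia.
  rewrite d_k_eq // subnn (_ : (k == 0%N) = false); last by rewrite -?/P; lia.
  rewrite (dd_out k N.+3 (k - 1)); last by apply/orP; left; lia.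
  rewrite (dd_out k N.+2 0); last by apply/orP; left; lia.
  by rewrite subr0 addr0.
have hik2 : (k < i)%N by rewrite ltn_neqAle eq_sym hik' hik.
rewrite (_ : (i == 0%N) = false); last by rewrite -?/P; lia.
case: (ltnP P i) => hPi.
  rewrite (dd_out k N.+3 i); last by apply/orP; right.
  case: (ltnP P (i - 1)) => hPi1.
    rewrite !dd_out ?subrr ?addr0 //; apply/orP; right; lia.
  have ei : (i - 1 = P)%N by lia.
  rewrite ei dd_in //; last by rewrite -?/P; lia.
  rewrite /P d_top // dd_in //; [| rewrite -?/P; lia | rewrite -?/P; lia].
  rewrite (_ : i - k = (k - 1) * N.+2)%N; last by rewrite -?/P; lia.
  by rewrite d_top // sub0r addNr.
rewrite dd_in //.
rewrite dd_in //; [|rewrite -?/P; lia|rewrite -?/P; lia].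
have hd := d_rec k hk N.+3 i (ltac:(lia)) (ltac:(rewrite -/P; lia)).
case: (ltnP (i - k) k) => hik3.
  rewrite dd_out; last by apply/orP; left.
  rewrite hd (_ : N.+3 - 1 = N.+2)%N; last by rewrite -?/P; lia.
  rewrite (d_small k hk N (i - k)); last by lia.
  by rewrite !addr0 subrr.
rewrite dd_in //; [|rewrite -?/P; lia].
rewrite hd (_ : N.+3 - 1 = N.+2)%N; last by rewrite -?/P; lia.
ring.
Qed.

Lemma sum_delta (F : nat -> rat) a b i :
  \sum_(a <= j < b) F j * (i == j)%:R = if (a <= i < b)%N then F i else 0.
Proof.
elim: b => [|b IH]; first by rewrite big_geq // andbF.
case: (leqP a b) => hab.
  rewrite big_nat_recr //= IH.
  have [->|hib] := eqVneq i b.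
    by rewrite ltnn andbF hab ltnSn mulr1 add0r.
  by rewrite mulr0 addr0 ltnS (leq_eqVlt i b) (negbTE hib).
rewrite big_geq //; case: ifP => // /andP [h1 h2]; lia.
Qed.

Lemma coefDk k n i : (D_k k n)`_i = dd k n i.
Proof.
rewrite /D_k /dd; case: ifP => hn /=; last by rewrite coef0.
rewrite coef_sum.
under eq_bigr do rewrite coefZ coefXn.
by rewrite sum_delta addn1 ltnS.
Qed.

Lemma fps_mul2 (f g : fps) n : (forall i, (2 <= i)%N -> f i = 0) ->
  fps_mul f g n.+1 = f 0%N * g n.+1 + f 1%N * g n.
Proof.
move=> hf; rewrite /fps_mul big_ord_recl big_ord_recl /= big1 ?addr0 ?subn0 ?subn1 //.
by move=> j _; rewrite hf ?mul0r.
Qed.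

Lemma dd2 k x : (2 <= k)%N -> dd k 2 x = if (k <= x <= 2 * k - 2)%N then 1 else 0.
Proof.
move=> hk; rewrite /dd /=.
have -> : ((k - 1) * 2 = 2 * k - 2)%N by rewrite mulnC mulnBr muln1.
by case: ifP => // h; rewrite d_two.
Qed.

Lemma s_one k : (2 <= k)%N -> s_k k 1 = 1.
Proof.
move=> hk; rewrite /s_k muln1 subnn bin0 mulr1 divff //.
by rewrite pnatr_eq0; lia.
Qed.

From Stdlib Require Import FunctionalExtensionality.

Theorem mainTheorem3 (k : nat) (hk : (2 <= k)%N) :
  fps_mul (denom_k k) (D_k k) =
  fps_sub (fps_mul (fps_mono ('X^k) 1) (S_k k))
          (fps_mono ('X^(2 * k - 1)) 2).
Proof.
apply: functional_extensionality => n; rewrite /fps_sub.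
case: n => [|n].
  by rewrite /fps_mul !big_ord1 /D_k /fps_mono /S_k /= !mulr0 subr0.
have hden : forall i, (2 <= i)%N -> denom_k k i = 0.
  by move=> [|[|i]].
have hmo : forall i, (2 <= i)%N -> fps_mono ('X^k) 1 i = 0.
  by move=> [|[|i]].
rewrite !fps_mul2 //.
rewrite /denom_k /fps_mono /S_k /=.
apply/polyP => i.
rewrite mul0r add0r mulrBl mul1r !(coefD, coefN, coefXM, coefXnM, coefDk).
case: n => [|[|n]].
- by rewrite /dd /= !coef0 !if_same; ring.
- rewrite ltn0Sn eqxx coefC coefXn (s_one k hk) !dd2 //.
  rewrite (_ : dd k 1 (i - k) = 0); last by rewrite /dd.
  rewrite if_same addr0.
  repeat (case: ifP => [/idP ?|/negbT ?]); case: eqP => ?; try (exfalso; lia); rewrite /= ?mulr0n ?mulr1n; ring.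
- rewrite (coef_main k n.+3 i) // ltn0Sn /= coefC coef0 subr0.
  case: (ltnP i k) => h.
    by rewrite (_ : (i == k) = false) //; lia.
  by rewrite subn_eq0 eqn_leq h andbT.
Qed.
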